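(* Let $k,m\in\mathbb{N}$ with $m<k\le 2m$ and $\gcd(2k+1,2(2m+1))=1$, and let $a>0$ satisfy $\frac{1}{4km+3k+m+1}\le\frac{a}{2k+1}\le\frac{1}{4km+k+3m+1}$. For $s=1,\dots,4m+1$ and $n=1,\dots,2k$, put $X_{sn}=\frac{s}{2(2m+1)}-\frac{n}{2k+1}$ and $\Phi_{sn}(0,0)=\sum_{l\in\mathbb{Z}}Q_2\big(2a(2m+1)(l+X_{sn})\big)$, where $Q_2(x)=(1-|x|)\chi_{[-1,1]}(x)$. Then $-1<X_{sn}<1$, $X_{sn}\neq0$, and $$\Phi_{sn}(0,0)=\begin{cases}\sum_{l=-1}^{0}Q_2\big(2a(2m+1)(l+X_{sn})\big), & 0<X_{sn}<1,\\ \sum_{l=0}^{1}Q_2\big(2a(2m+1)(l+X_{sn})\big), & -1<X_{sn}<0.\end{cases}$$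
   Context: This is the setting $ab=\frac{2k+1}{2(2m+1)}$ with $b$ in $\left[\frac{2k+1}{2}-\frac{k-m}{2(2m+1)},\frac{2k+1}{2}+\frac{k-m}{2(2m+1)}\right]$, rewritten as the stated range for $a$; $\Phi_{sn}(0,0)$ is the $(s,n)$ entry of the symbol matrix of the Gabor system of $Q_2$ at $(x,t)=(0,0)$. *)

(* Defs.v *)
From Stdlib Require Import Reals ZArith Arith.
From Coquelicot Require Import Coquelicot.
Open Scope R_scope.

Definition Q2 (x : R) : R :=
  if Rle_dec (Rabs x) 1 then 1 - Rabs x else 0.

(* Summation over Z: sum_{l in Z} f l converges to v, meaning the series over
   l >= 0 and over l <= -1 both converge and their sums add up to v. *)
Definition is_Zsum (f : Z -> R) (v : R) : Prop :=
  exists v1 v2 : R,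
    is_series (fun j : nat => f (Z.of_nat j)) v1 /\
    is_series (fun j : nat => f (- Z.of_nat (S j))%Z) v2 /\
    v = v1 + v2.

Definition Xsn (k m s n : nat) : R :=
  INR s / (2 * (2 * INR m + 1)) - INR n / (2 * INR k + 1).

Definition Phi_term (a : R) (k m s n : nat) (l : Z) : R :=
  Q2 (2 * a * (2 * INR m + 1) * (IZR l + Xsn k m s n)).

(* Main.v *)
Require Import Defs.
From Stdlib Require Import Reals ZArith Arith.
From Coquelicot Require Import Coquelicot.
From Stdlib Require Import Lra Lia.
Open Scope R_scope.

Lemma is_series_zero (f : nat -> R) : (forall j, f j = 0) -> is_series f 0.
Proof.
  intros H. apply (is_series_ext (fun _ => 0)); [intros; now rewrite H|].
  unfold is_series. apply filterlim_ext with (f := fun _ => 0).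
  - intros n. rewrite sum_n_const. simpl. ring.
  - apply filterlim_const.
Qed.
Lemma is_series_two (f : nat -> R) : (forall j, (2 <= j)%nat -> f j = 0) -> is_series f (f 0%nat + f 1%nat).
Proof.
  intros H.
  assert (H2 : is_series (fun k => f (S (S k))) 0).
  { apply is_series_zero. intros j. apply H. lia. }
  apply is_series_decr_1. apply is_series_decr_1. simpl.
  match goal with |- is_series _ ?l => replace l with 0 end.
  exact H2.
  unfold plus, opp; simpl. ring.
Qed.

Lemma is_series_one (f : nat -> R) : (forall j, (1 <= j)%nat -> f j = 0) -> is_series f (f 0%nat).
Proof.
  intros H. assert (H2 : is_series f (f 0%nat + f 1%nat)).
  { apply is_series_two. intros; apply H; lia. }
  rewrite (H 1%nat), Rplus_0_r in H2 by lia. exact H2.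
Qed.

Lemma Q2_zero (y : R) : 1 <= Rabs y -> Q2 y = 0.
Proof.
  intros H. unfold Q2. destruct (Rle_dec (Rabs y) 1); lra.
Qed.

Lemma Phi_zero (a : R) (k m s n : nat) (l : Z) :
  1 <= 2 * a * (2 * INR m + 1) -> 1 <= Rabs (IZR l + Xsn k m s n) ->
  Phi_term a k m s n l = 0.
Proof.
  intros Hc Hl. unfold Phi_term. apply Q2_zero.
  rewrite Rabs_mult. rewrite (Rabs_right (2 * a * (2 * INR m + 1))) by lra.
  nra.
Qed.

Lemma abs_ge1_pos (y : R) : 1 <= y -> 1 <= Rabs y.
Proof. intros; rewrite Rabs_right; lra. Qed.
Lemma abs_ge1_neg (y : R) : y <= -1 -> 1 <= Rabs y.
Proof. intros; rewrite Rabs_left1; lra. Qed.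

Theorem lemma3p1 (k m : nat) (a : R)
  (Hmk : (m < k)%nat) (Hkm : (k <= 2 * m)%nat)
  (Hgcd : Nat.gcd (2 * k + 1) (2 * (2 * m + 1)) = 1%nat)
  (Ha : 0 < a)
  (Hlo : 1 / (4 * INR k * INR m + 3 * INR k + INR m + 1) <= a / (2 * INR k + 1))
  (Hhi : a / (2 * INR k + 1) <= 1 / (4 * INR k * INR m + INR k + 3 * INR m + 1))
  (s n : nat) (Hs : (1 <= s <= 4 * m + 1)%nat) (Hn : (1 <= n <= 2 * k)%nat) :
  -1 < Xsn k m s n < 1 /\ Xsn k m s n <> 0 /\
  (0 < Xsn k m s n ->
     is_Zsum (Phi_term a k m s n)
       (Phi_term a k m s n (-1)%Z + Phi_term a k m s n 0%Z)) /\
  (Xsn k m s n < 0 ->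
     is_Zsum (Phi_term a k m s n)
       (Phi_term a k m s n 0%Z + Phi_term a k m s n 1%Z)).
Proof.
  assert (HS1 : 1 <= INR s) by (apply (le_INR 1); lia).
  assert (HS2 : INR s <= 4 * INR m + 1).
  { assert (H := le_INR _ _ (proj2 Hs)). rewrite plus_INR, mult_INR in H.
    replace (INR 4) with 4 in H by (simpl; lra). simpl in H. lra. }
  assert (HN1 : 1 <= INR n) by (apply (le_INR 1); lia).
  assert (HN2 : INR n <= 2 * INR k).
  { assert (H := le_INR _ _ (proj2 Hn)). rewrite mult_INR in H.
    replace (INR 2) with 2 in H by (simpl; lra). lra. }
  assert (HM : 0 <= INR m) by apply pos_INR.
  assert (HK : 0 <= INR k) by apply pos_INR.
  set (u := INR s / (2 * (2 * INR m + 1))).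
  set (v := INR n / (2 * INR k + 1)).
  assert (Hu : u * (2 * (2 * INR m + 1)) = INR s) by (unfold u; field; lra).
  assert (Hv : v * (2 * INR k + 1) = INR n) by (unfold v; field; lra).
  assert (HX : Xsn k m s n = u - v) by reflexivity.
  assert (Hu0 : 0 < u < 1) by (split; nra).
  assert (Hv0 : 0 < v < 1) by (split; nra).
  assert (Hb : -1 < Xsn k m s n < 1) by (rewrite HX; lra).
  assert (Hc : 1 <= 2 * a * (2 * INR m + 1)).
  { set (D := 4 * INR k * INR m + 3 * INR k + INR m + 1) in Hlo.
    assert (HD : 0 < D) by (unfold D; nra).
    set (p := 1 / D) in Hlo. set (q := a / (2 * INR k + 1)) in Hlo.
    assert (Hp : p * D = 1) by (unfold p; field; lra).
    assert (Hq : q * (2 * INR k + 1) = a) by (unfold q; field; lra).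
    assert (Hp0 : 0 < p) by (unfold p; apply Rdiv_lt_0_compat; lra).
    assert (H1 : p * (2 * INR k + 1) <= a) by nra.
    assert (H2 : D <= (2 * INR k + 1) * (2 * (2 * INR m + 1))) by (unfold D; nra).
    nra. }
  split; [exact Hb|]. split.
  { intros H0. rewrite HX in H0.
    assert (E : INR s * (2 * INR k + 1) = 2 * INR n * (2 * INR m + 1)).
    { assert (u = v) by lra. nra. }
    assert (En : (s * (2 * k + 1) = 2 * (2 * m + 1) * n)%nat).
    { apply INR_eq. rewrite !mult_INR, !plus_INR, !mult_INR.
      replace (INR 2) with 2 by (simpl; lra). replace (INR 1) with 1 by (simpl; lra).
      lra. }
    assert (Hd : Nat.divide (2 * k + 1) n).
    { apply (Nat.gauss _ (2 * (2 * m + 1))); [|exact Hgcd].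
      exists s. rewrite En. reflexivity. }
    destruct Hd as [q Hq]. destruct q as [|q]; [lia|]. rewrite Nat.mul_succ_l in Hq. lia. }
  split.
  - intros Hpos. exists (Phi_term a k m s n 0%Z), (Phi_term a k m s n (-1)%Z).
    split; [|split].
    + apply is_series_one. intros j Hj. apply Phi_zero; [exact Hc|].
      apply abs_ge1_pos. rewrite <- INR_IZR_INZ.
      assert (1 <= INR j) by (apply (le_INR 1); lia). lra.
    + apply is_series_one. intros j Hj. apply Phi_zero; [exact Hc|].
      apply abs_ge1_neg. rewrite opp_IZR, <- INR_IZR_INZ.
      assert (2 <= INR (S j)) by (apply (le_INR 2); lia). lra.
    + simpl. ring.
  - intros Hneg. exists (Phi_term a k m s n 0%Z + Phi_term a k m s n 1%Z), 0.
    split; [|split].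
    + apply is_series_two. intros j Hj. apply Phi_zero; [exact Hc|].
      apply abs_ge1_pos. rewrite <- INR_IZR_INZ.
      assert (2 <= INR j) by (apply (le_INR 2); lia). lra.
    + apply is_series_zero. intros j. apply Phi_zero; [exact Hc|].
      apply abs_ge1_neg. rewrite opp_IZR, <- INR_IZR_INZ.
      assert (1 <= INR (S j)) by (apply (le_INR 1); lia). lra.
    + ring.
Qed.
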